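(* Let $d \ge 2$ and let $c_0,\dots,c_7 \in \mathbb{Z}_d$. The $d$-state first degree cellular automaton with parameters $\langle c_0,c_1,c_2,c_3,c_4,c_5,c_6,c_7\rangle$ is reversible for every number of cells $n \in \mathbb{N}$ (i.e. $G_n$ is a bijection of $\mathbb{Z}_d^n$ for every $n\ge 1$) if and only if all three of the following conditions hold: (1) $\gcd(c_5,d)=1$ (with $c_7$ arbitrary in $\mathbb{Z}_d$); (2) $c_0 \equiv c_1 \equiv c_2 \equiv c_3 \equiv 0 \pmod{\mathrm{rad}(d)}$; (3) $c_4 \cdot c_6 \equiv 0 \pmod{\mathrm{rad}(d)}$.
   Context: Fix an integer $d\ge 2$ and the state set $S=\mathbb{Z}_d=\{0,1,\dots,d-1\}$. A first degree cellular automaton (FDCA) with parameters $\langle c_0,\dots,c_7\rangle$, $c_i\in\mathbb{Z}_d$, is the one-dimensional 3-neighborhood cellular automaton whose local rule $R:S^3\to S$ is $R(x,y,z)=c_0xyz+c_1xy+c_2xz+c_3yz+c_4x+c_5y+c_6z+c_7 \pmod d$. For $n\in\mathbb{N}$, $n\ge1$, the $n$-cell automaton under the null boundary condition acts on configurations $x=(x_0,\dots,x_{n-1})\in S^n$ by the global map $G_n:S^n\to S^n$, $G_n(x)_i=R(x_{i-1},x_i,x_{i+1})$ for $0\le i\le n-1$, with the convention $x_{-1}=x_n=0$. The automaton is reversible for a given $n$ if $G_n$ is a bijection. $\mathrm{rad}(d)=\prod_{p\mid d,\ p\text{ prime}}p$ is the product of the distinct primes dividing $d$; since $\mathrm{rad}(d)\mid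 d$, congruences of elements of $\mathbb{Z}_d$ modulo $\mathrm{rad}(d)$ are well defined. *)

(* Defs.v *)
From mathcomp Require Import all_boot.
Set Implicit Arguments. Unset Strict Implicit. Unset Printing Implicit Defensive.

(* States: Z_d represented as 'I_d (d >= 2 assumed in the theorem);
   arithmetic is done on nat and reduced mod d. *)

Definition rad (d : nat) : nat := \prod_(p <- primes d) p.

Definition fdca_rule (d : nat) (c : 'I_8 -> 'I_d) (x y z : nat) : nat :=
  (c (inord 0) * x * y * z + c (inord 1) * x * y + c (inord 2) * x * z
   + c (inord 3) * y * z + c (inord 4) * x + c (inord 5) * y
   + c (inord 6) * z + c (inord 7)) %% d.

Definition cell (d n : nat) (x : {ffun 'I_n -> 'I_d}) (i : nat) : nat :=
  if (i < n) =P true is ReflectT h then nat_of_ord (x (Ordinal h)) else 0.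

(* global map G_n under null boundary: G_n(x)_i = R(x_{i-1}, x_i, x_{i+1}),
   with x_{-1} = x_n = 0 *)
Definition fdca_global (d n : nat) (c : 'I_8 -> 'I_d)
  (x : {ffun 'I_n -> 'I_d}) : {ffun 'I_n -> 'I_d} :=
  [ffun i : 'I_n =>
     (* the value is < d since it is reduced mod d (d > 0); insubd only
        serves to package it as an element of 'I_d *)
     insubd (x i) (fdca_rule c (if i == 0 :> nat then 0 else cell x i.-1)
                               (cell x i) (cell x i.+1))].

Definition fdca_reversible (d n : nat) (c : 'I_8 -> 'I_d) : Prop :=
  bijective (@fdca_global d n c).

(* Main.v *)
Require Import Defs.
From mathcomp Require Import all_boot.
From mathcomp Require Import ssralg ssrnum ssrint intdiv zmodp finalg countalg fingroup perm.
From mathcomp Require Import ring zify.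
Set Implicit Arguments. Unset Strict Implicit. Unset Printing Implicit Defensive.
Import GRing.Theory.

Section FieldPart.
Local Open Scope ring_scope.
Variable F : fieldType.
Variable a : nat -> F.

Definition Rf (x y z : F) : F :=
  a 0 * x * y * z + a 1 * x * y + a 2 * x * z + a 3 * y * z
  + a 4 * x + a 5 * y + a 6 * z + a 7.

Definition Hs (s : seq F) : seq F :=
  [seq Rf (if i == 0%N then 0 else nth 0 s i.-1) (nth 0 s i) (nth 0 s i.+1)
  | i <- iota 0 (size s)].

Definition injn (n : nat) := forall s t : seq F,
  size s = n -> size t = n -> Hs s = Hs t -> s = t.

Lemma injnP n s t : injn n -> Hs s = Hs t -> size s = n -> size t = n -> s = t.
Proof. by move=> H E hs ht; apply: H. Qed.

Lemma Hs1 x : Hs [:: x] = [:: Rf 0 x 0].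
Proof. by []. Qed.
Lemma Hs2 x y : Hs [:: x; y] = [:: Rf 0 x y; Rf x y 0].
Proof. by []. Qed.
Lemma Hs3 x y z : Hs [:: x; y; z] = [:: Rf 0 x y; Rf x y z; Rf y z 0].
Proof. by []. Qed.
Lemma Hs6 x0 x1 x2 x3 x4 x5 : Hs [:: x0; x1; x2; x3; x4; x5] =
  [:: Rf 0 x0 x1; Rf x0 x1 x2; Rf x1 x2 x3; Rf x2 x3 x4; Rf x3 x4 x5; Rf x4 x5 0].
Proof. by []. Qed.

Lemma a5nz : injn 1 -> a 5 != 0.
Proof.
move=> H; apply/eqP => h5.
have E : Hs [:: 0] = Hs [:: 1] by rewrite !Hs1 /Rf h5; congr [:: _]; ring.
by have [] := injnP H E erefl erefl; apply/eqP; rewrite eq_sym oner_eq0.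
Qed.

Lemma a3z : injn 2 -> a 3 = 0.
Proof.
move=> H; apply/eqP; apply/negPn/negP => h3.
pose al := - a 6 / a 3; pose be := - a 5 / a 3; pose s := a 1 * al + a 5.
have [s0|s0] := eqVneq s 0.
  have E : Hs [:: al; 0] = Hs [:: al; 1].
    rewrite !Hs2 /Rf; congr [:: _; _].
      rewrite /al; field; exact: h3.
    have h : a 5 = - (a 1 * al) by apply/eqP; rewrite -addr_eq0 addrC; apply/eqP.
    rewrite h; ring.
  by have [] := injnP H E erefl erefl; apply/eqP; rewrite eq_sym oner_eq0.
pose y := (Rf (al+1) be 0 - (a 4 * al + a 7)) / s.
have E : Hs [:: al + 1; be] = Hs [:: al; y].
  rewrite !Hs2; congr [:: _; _].
    rewrite /Rf /al /be; field; exact: h3.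
  rewrite /y /s; set r := Rf _ _ _; rewrite /Rf; field; exact: s0.
have [] := injnP H E erefl erefl => /eqP.
by rewrite -subr_eq0 addrC addKr oner_eq0.
Qed.

Lemma a1z : injn 2 -> a 3 = 0 -> a 5 != 0 -> a 1 = 0.
Proof.
move=> H h3 h5; apply/eqP; apply/negPn/negP => h1.
pose al := - a 5 / a 1; pose be := - a 4 / a 1.
have E : Hs [:: al; be + 1] = Hs [:: al + a 6 / a 5; be].
  rewrite !Hs2 /Rf h3 /al /be; congr [:: _; _]; field; by apply/andP.
have [] := injnP H E erefl erefl => _ /eqP.
by rewrite -subr_eq0 addrC addKr oner_eq0.
Qed.

Lemma a2z : injn 6 -> a 0 = 0 -> a 1 = 0 -> a 3 = 0 -> a 2 = 0.
Proof.
move=> H h0 h1 h3; apply/eqP; apply/negPn/negP => h2.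
pose x0 := - a 6 / a 2; pose x1 := (a 5 - a 6) / a 2;
pose x4 := (a 5 - a 4) / a 2; pose x5 := - a 4 / a 2.
have E : Hs [:: x0; x1; 0; 0; x4; x5] = Hs [:: x0; x1; 1; -1; x4; x5].
  rewrite !Hs6 /Rf h0 h1 h3 /x0 /x1 /x4 /x5; congr [:: _; _; _; _; _; _];
  field; exact: h2.
have [] := injnP H E erefl erefl => /eqP.
by rewrite eq_sym oner_eq0.
Qed.

Lemma tri (A B C : F) (e : nat -> F) n : B != 0 -> A * C = 0 ->
  (forall j, (n <= j)%N -> e j = 0) ->
  (forall i, (i < n)%N ->
     A * (if i == 0%N then 0 else e i.-1) + B * e i + C * e i.+1 = 0) ->
  forall i, e i = 0.
Proof.
move=> hB hAC hn hL.
have [A0|A0] := eqVneq A 0.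
  suff: forall m i, (n - m <= i)%N -> e i = 0.
    by move=> S i; apply: (S n); rewrite subnn.
  elim=> [|m IH] i hi; first by rewrite subn0 in hi; exact: hn.
  have [hi'|hi'] := leqP (n - m) i; first exact: IH.
  have iln : (i < n)%N by lia.
  have := hL i iln; rewrite A0 mul0r add0r (IH i.+1); last by lia.
  by rewrite mulr0 addr0 => /eqP; rewrite mulf_eq0 (negbTE hB) /= => /eqP.
have C0 : C = 0 by move/eqP: hAC; rewrite mulf_eq0 (negbTE A0) /= => /eqP.
elim/ltn_ind => i IH.
have [hi|hi] := ltnP i n; last exact: hn.
have := hL i hi; rewrite C0 mul0r addr0.
have -> : (if i == 0%N then 0 else e i.-1) = 0.
  by case: i IH hi => [|i] IH hi //=; apply: IH.
by rewrite mulr0 add0r => /eqP; rewrite mulf_eq0 (negbTE hB) /= => /eqP.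
Qed.
End FieldPart.

Section FinPart.
Local Open Scope ring_scope.
Variable F : finFieldType.
Variable a : nat -> F.

Lemma a0z : injn a 3 -> a 1 = 0 -> a 3 = 0 -> a 5 != 0 -> a 0 = 0.
Proof.
move=> H h1 h3 h5; apply/eqP; apply/negPn/negP => h0.
pose k := - a 5 / a 0.
have kn0 : k != 0 by rewrite /k mulf_neq0 ?oppr_eq0 ?invr_eq0.
pose t := Rf a 1 0 k.
pose io (w : F * F) : seq F := if w.1 * w.2 == k then [:: 1; w.1; k]
   else [:: w.1; (t - (a 2 * w.1 * w.2 + a 4 * w.1 + a 6 * w.2 + a 7))
                 / (a 0 * w.1 * w.2 + a 5); w.2].
have io3 w : exists x0 x1 x2, io w = [:: x0; x1; x2] /\ Rf a x0 x1 x2 = t.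
  rewrite /io; case: ifP => hk.
    exists 1, w.1, k; split => //; rewrite /t /Rf h1 h3 /k; field; exact: h0.
  have nz : a 0 * w.1 * w.2 + a 5 != 0.
    rewrite (_ : a 0 * w.1 * w.2 + a 5 = a 0 * (w.1 * w.2 - k)); last first.
      by rewrite /k; field.
    by rewrite mulf_neq0 // subr_eq0 hk.
  do 3 eexists; split; first reflexivity.
  rewrite /Rf h1 h3; field; exact: nz.
pose h w := (nth 0 (Hs a (io w)) 0, nth 0 (Hs a (io w)) 2).
have hE w : Hs a (io w) = [:: (h w).1; t; (h w).2].
  by rewrite /h; have [x0 [x1 [x2 [-> e]]]] := io3 w; rewrite Hs3 /= e.
have sio w : size (io w) = 3%N by have [x0 [x1 [x2 [-> e]]]] := io3 w.
have ioinj : injective io.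
  move=> [u v] [u' v']; rewrite /io /=; case: ifP => e; case: ifP => e' //.
  - case=> hu; move: e e'; rewrite -hu => /eqP e /eqP; rewrite -e => e'.
    have u0 : u != 0 by apply: contraNneq kn0 => u0; rewrite -e u0 mul0r.
    by rewrite (mulfI u0 e').
  - by case=> hu _ hv; rewrite -hu -hv mul1r eqxx in e'.
  - by case=> hu _ hv; rewrite hu hv mul1r eqxx in e.
  - by case=> -> _ ->.
have hinj : injective h.
  move=> w w' e; apply: ioinj; apply: (injnP H); rewrite ?sio //.
  by rewrite !hE e.
case: (injF_bij hinj) => g hK gh.
pose w := g (nth 0 (Hs a [:: 1; 0; k]) 0, nth 0 (Hs a [:: 1; 0; k]) 2).
have E : Hs a (io w) = Hs a [:: 1; 0; k] by rewrite hE /w gh Hs3.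
have := injnP H E (sio w) erefl.
rewrite /io; case: ifP => e.
  by case=> w10; rewrite w10 mul0r eq_sym (negbTE kn0) in e.
by case=> hu _ hv; rewrite hu hv mul1r eqxx in e.
Qed.

Lemma a46 : (forall n, (0 < n)%N -> injn a n) -> a 0 = 0 -> a 1 = 0 ->
  a 2 = 0 -> a 3 = 0 -> a 5 != 0 -> a 4 * a 6 = 0.
Proof.
move=> H h0 h1 h2 h3 h5; apply/eqP; rewrite mulf_eq0; apply/negPn/negP.
rewrite negb_or => /andP[h4 h6].
pose T (w : F * F) : F * F := (w.2, - (a 4 * w.1 + a 5 * w.2) / a 6).
have Tinj : injective T.
  move=> [x y] [x' y'] [] /= -> e; congr pair.
  by move: e => /(mulIf (invr_neq0 h6)) /oppr_inj /addIr /(mulfI h4).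
pose sg := perm Tinj.
pose N := #[sg]%g.
pose st i := iter i T (0, 1).
have stS i : st i.+1 = T (st i) by [].
have stN : st N = (0, 1).
  rewrite /st -(eq_iter (f := sg)); last by move=> z; rewrite permE.
  by rewrite -permX expg_order perm1.
have N0 : (0 < N)%N by apply: order_gt0.
have N1 : N != 1%N.
  apply/eqP => N1; move: stN; rewrite N1 /st /= /T /= => -[] /eqP.
  by rewrite oner_eq0.
pose n := N.-1.
have Nn : N = n.+1 by rewrite /n prednK.
have n0 : (0 < n)%N by move: N0 N1; rewrite Nn; case: (n).
pose v i := (st i).2.
pose w i := (st i).1.
have wS i : w i.+1 = v i by [].
have vS i : v i.+1 = - (a 4 * w i + a 5 * v i) / a 6 by [].
have vn : v n = 0 by rewrite -wS -Nn /w stN.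
pose s := [seq v i | i <- iota 0 n].
have ss : size s = n by rewrite size_map size_iota.
have nths i : (i < n)%N -> nth 0 s i = v i.
  by move=> hi; rewrite (nth_map 0%N) ?size_iota // nth_iota.
have E : Hs a s = Hs a (nseq n 0).
  rewrite /Hs ss size_nseq; apply/eq_in_map => i; rewrite mem_iota add0n => /andP[_ hi].
  rewrite !nth_nseq !if_same.
  have -> : (if i == 0%N then 0 else nth 0 s i.-1) = w i.
    case: i hi => [|i] hi //=; rewrite nths ?wS //; exact: ltnW.
  have -> : nth 0 s i.+1 = v i.+1.
    have [hl|hl] := ltnP i.+1 n; first by rewrite nths.
    have -> : i.+1 = n by apply/eqP; rewrite eqn_leq hl hi.
    by rewrite nth_default ?ss // vn.
  rewrite nths // vS /Rf h0 h1 h2 h3; field; exact: h6.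
have := injnP (H n n0) E ss (size_nseq _ _).
move/(congr1 (nth 0 ^~ 0%N)); rewrite nths // nth_nseq n0 /v /= => /eqP.
by rewrite oner_eq0.
Qed.
End FinPart.


Lemma gvalE d n (c : 'I_8 -> 'I_d) x (i : 'I_n) : 0 < d ->
  nat_of_ord (fdca_global c x i) = fdca_rule c (if i == 0 :> nat then 0 else cell x i.-1)
                               (cell x i) (cell x i.+1).
Proof. by move=> d0; rewrite /fdca_global ffunE insubdK // unfold_in /fdca_rule ltn_pmod. Qed.

Lemma surj_injF (T : finType) (f : T -> T) : (forall y, exists x, f x == y) ->
  injective f.
Proof.
move=> S.
pose h y := xchoose (S y).
have hK : cancel h f by move=> y; apply/eqP; exact: (xchooseP (S y)).
case: (injF_bij (can_inj hK)) => h' hh' h'h.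
have fE x : f x = h' x by rewrite -{1}(h'h x) hK.
by apply: (can_inj (g := h)) => x; rewrite fE h'h.
Qed.

Section Transfer.
Local Open Scope ring_scope.
Variables (p d : nat) (c : 'I_8 -> 'I_d).
Hypotheses (pp : prime p) (pd : (p %| d)%N) (d0 : (0 < d)%N).

Definition aF (j : nat) : 'F_p := (nat_of_ord (c (inord j)))%:R.

Lemma rule_cast x y z :
  ((fdca_rule c x y z)%:R : 'F_p) = Rf aF x%:R y%:R z%:R.
Proof.
by rewrite /fdca_rule -(Fp_nat_mod pp) (modn_dvdm _ pd) (Fp_nat_mod pp) !natrD !natrM.
Qed.

Lemma transfer n : @fdca_reversible d n c -> injn aF n.
Proof.
case=> g gK Kg.
pose sq (x : {ffun 'I_n -> 'F_p}) := [seq x i | i <- enum 'I_n].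
pose H (x : {ffun 'I_n -> 'F_p}) := [ffun i : 'I_n => nth 0 (Hs aF (sq x)) i].
pose pr (x : {ffun 'I_n -> 'I_d}) := [ffun i => ((x i : nat)%:R : 'F_p)].
have ssq x : size (sq x) = n by rewrite size_map size_enum_ord.
have cellE x k : nth 0 (sq (pr x)) k = (cell x k)%:R.
  rewrite /cell; case: eqP => [h|h].
    rewrite (nth_map (Ordinal h)) ?size_enum_ord // ffunE.
    by congr (_ %:R); congr (nat_of_ord (x _)); apply: val_inj; rewrite /= fintype.nth_enum_ord.
  by rewrite nth_default // ssq leqNgt; apply/negP.
have prG x : pr (fdca_global c x) = H (pr x).
  apply/ffunP => i; rewrite [LHS]ffunE [RHS]ffunE gvalE // rule_cast /Hs ssq.
  rewrite (nth_map 0%N) ?size_iota // nth_iota // add0n !cellE.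
  by case: (i == 0 :> nat).
have Hsurj y : exists x, H x == y.
  pose Y := [ffun i => (insubd (Ordinal d0) (val (y i)) : 'I_d)].
  exists (pr (g Y)); rewrite -prG Kg; apply/eqP/ffunP => i; rewrite !ffunE.
  have lt : (val (y i) < d)%N.
    have h1 := ltn_ord (y i); have h2 := Fp_cast pp; have h3 := dvdn_leq d0 pd.
    change (nat_of_ord (y i) < d)%N; lia.
  rewrite insubdK ?unfold_in //.
  exact: natr_Zp.
have Hinj := surj_injF Hsurj.
move=> s t hs ht E.
pose fs (u : seq 'F_p) := [ffun i : 'I_n => nth 0 u i].
have sqf u : size u = n -> sq (fs u) = u.
  move=> hu; apply: (@eq_from_nth _ 0); first by rewrite ssq hu.
  move=> j; rewrite ssq => hj.
  by rewrite (nth_map (Ordinal hj)) ?size_enum_ord // ffunE fintype.nth_enum_ord.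
rewrite -(sqf s hs) -(sqf t ht); congr sq; apply: Hinj.
by apply/ffunP => i; rewrite !ffunE !sqf // E.
Qed.
End Transfer.


Section Core.
Local Open Scope ring_scope.

Definition PZ (C : nat -> int) (l m r : int) : int :=
  C 0%N * l * m * r + C 1%N * l * m + C 2%N * l * r + C 3%N * m * r
  + C 4%N * l + C 5%N * m + C 6%N * r + C 7%N.

Definition lft (X : nat -> int) (i : nat) : int := if i == 0%N then 0 else X i.-1.

Lemma prod3 (D u v w u' v' w' : int) : (D %| u - u')%Z -> (D %| v - v')%Z ->
  (D %| w - w')%Z -> (D %| u * v * w - u' * v' * w')%Z.
Proof.
move=> hu hv hw.
have -> : u * v * w - u' * v' * w' =
  (u - u') * v * w + u' * (v - v') * w + u' * v' * (w - w') by ring.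
apply: rpredD; first apply: rpredD.
- by apply: dvdz_mulr; apply: dvdz_mulr.
- by apply: dvdz_mulr; apply: dvdz_mull.
- exact: dvdz_mull.
Qed.

Lemma prod2 (D u v u' v' : int) : (D %| u - u')%Z -> (D %| v - v')%Z ->
  (D %| u * v - u' * v')%Z.
Proof.
move=> hu hv.
have -> : u * v - u' * v' = (u - u') * v + u' * (v - v') by ring.
by apply: rpredD; [apply: dvdz_mulr|apply: dvdz_mull].
Qed.

Lemma core (p d n : nat) (C : nat -> int) (X Y : nat -> int) :
  prime p -> (0 < d)%N ->
  (forall j, (j < 4)%N -> (p%:Z %| C j)%Z) ->
  (p%:Z %| C 4%N * C 6%N)%Z -> ~~ (p%:Z %| C 5%N)%Z ->
  (forall j, (n <= j)%N -> X j = 0 /\ Y j = 0) ->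
  (forall i, (i < n)%N -> (d%:Z %| PZ C (lft X i) (X i) (X i.+1)
                                   - PZ C (lft Y i) (Y i) (Y i.+1))%Z) ->
  forall k, (k <= logn p d)%N -> forall j, ((p%:Z) ^+ k %| X j - Y j)%Z.
Proof.
move=> pp d0 hC hC46 hC5 hXY hd.
set q := p%:Z.
have q0 : q != 0 by rewrite /q eqz_nat -lt0n prime_gt0.
elim=> [|k IH] hk j; first by rewrite expr0 dvd1z.
have pkd : (q ^+ k.+1 %| d%:Z)%Z by rewrite dvdzE abszX /= pfactor_dvdn.
have qk0 : q ^+ k != 0 by rewrite expf_neq0.
have IHk : forall j0, (q ^+ k %| X j0 - Y j0)%Z by apply: IH; exact: ltnW.
pose e j0 := ((X j0 - Y j0) %/ q ^+ k)%Z.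
have he j0 : X j0 - Y j0 = e j0 * q ^+ k by rewrite /e divzK.
have hlft i : (q ^+ k %| lft X i - lft Y i)%Z.
  by rewrite /lft; case: (i == 0%N); rewrite ?subrr ?dvdz0.
have L i : (i < n)%N -> (q %| C 4%N * lft e i + C 5%N * e i + C 6%N * e i.+1)%Z.
  move=> hi; rewrite -(dvdz_mul2r qk0) -exprS.
  have -> : (C 4%N * lft e i + C 5%N * e i + C 6%N * e i.+1) * q ^+ k =
     (PZ C (lft X i) (X i) (X i.+1) - PZ C (lft Y i) (Y i) (Y i.+1))
     - (C 0%N * (lft X i * X i * X i.+1 - lft Y i * Y i * Y i.+1)
        + C 1%N * (lft X i * X i - lft Y i * Y i)
        + C 2%N * (lft X i * X i.+1 - lft Y i * Y i.+1)
        + C 3%N * (X i * X i.+1 - Y i * Y i.+1)).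
    have hl : lft X i - lft Y i = lft e i * q ^+ k.
      by rewrite /lft; case: (i == 0%N); rewrite ?subrr ?mul0r // he.
    have -> : lft X i = lft Y i + lft e i * q ^+ k by rewrite -hl; ring.
    have -> : X i = Y i + e i * q ^+ k by rewrite -he; ring.
    have -> : X i.+1 = Y i.+1 + e i.+1 * q ^+ k by rewrite -he; ring.
    rewrite /PZ; ring.
  apply: rpredB; first exact: dvdz_trans pkd (hd i hi).
  rewrite exprS.
  by rewrite !rpredD // dvdz_mul ?hC ?prod3 ?prod2 ?IHk ?hlft.
pose F := 'F_p.
pose e' j0 := ((e j0)%:~R : F).
have chp := pchar_Fp pp.
have hB : ((C 5%N)%:~R : F) != 0 by rewrite -(dvdz_pcharf chp).
have hAC : ((C 4%N)%:~R : F) * (C 6%N)%:~R = 0.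
  by apply/eqP; rewrite -intrM -(dvdz_pcharf chp).
have hn : forall j, (n <= j)%N -> e' j = 0.
  by move=> j' hj; rewrite /e' /e; case: (hXY j' hj) => -> ->; rewrite subrr div0z.
have hL : forall i, (i < n)%N -> ((C 4%N)%:~R : F) * (if i == 0%N then 0 else e' i.-1)
     + (C 5%N)%:~R * e' i + (C 6%N)%:~R * e' i.+1 = 0.
  move=> i hi; have := L i hi; rewrite (dvdz_pcharf chp) => /eqP.
  rewrite !intrD !intrM /lft /e'.
  by case: (i == 0%N).
have := tri hB hAC hn hL j.
rewrite /e' => /eqP; rewrite -(dvdz_pcharf chp) => qe.
by rewrite he exprS; apply: dvdz_mul => //; apply: dvdzz.
Qed.
End Core.


Lemma dvd_rad d p : prime p -> p %| d -> 0 < d -> p %| rad d.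
Proof.
move=> pp pd d0; rewrite /rad (big_rem p) /=; first exact: dvdn_mulr.
by rewrite mem_primes pp d0 pd.
Qed.

Lemma prod_dvd (s : seq nat) m : uniq s -> all prime s ->
  (forall p, p \in s -> p %| m) -> \prod_(p <- s) p %| m.
Proof.
elim: s => [|q s IH] /=; first by rewrite big_nil dvd1n.
move=> /andP[qs us] /andP[pq ps] hd; rewrite big_cons Gauss_dvd.
  by rewrite hd ?mem_head // IH // => p ps'; apply: hd; rewrite inE ps' orbT.
elim: s qs us ps {IH hd} => [|r s IH] /=; first by rewrite big_nil coprimen1.
rewrite inE negb_or => /andP[qr qs] /andP[_ us] /andP[pr ps].
rewrite big_cons coprimeMr IH // andbT (prime_coprime _ pq) dvdn_prime2 //.
Qed.

Lemma rad_dvd d m : 0 < d -> (forall p, prime p -> p %| d -> p %| m) -> rad d %| m.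
Proof.
move=> d0 h; apply: prod_dvd; first exact: primes_uniq.
  by apply/allP => p; rewrite mem_primes => /andP[].
by move=> p; rewrite mem_primes => /and3P[pp _ pd]; apply: h.
Qed.

Lemma cop_of d m : 0 < d -> (forall p, prime p -> p %| d -> ~~ (p %| m)) -> coprime m d.
Proof.
move=> d0 h; apply/negPn/negP => hc.
have g1 : 1 < gcdn m d.
  by rewrite ltn_neqAle eq_sym hc gcdn_gt0 d0 orbT.
have pp := pdiv_prime g1.
have := h _ pp (dvdn_trans (pdiv_dvd _) (dvdn_gcdr _ _)).
by rewrite (dvdn_trans (pdiv_dvd _) (dvdn_gcdl _ _)).
Qed.

Lemma cellO d n (x : {ffun 'I_n -> 'I_d}) (i : 'I_n) : cell x i = x i.
Proof.
rewrite /cell; case: eqP => [h|h]; last by rewrite ltn_ord in h.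
by congr (nat_of_ord (x _)); apply: val_inj.
Qed.

Lemma cell_lt d n (x : {ffun 'I_n -> 'I_d}) k : 0 < d -> cell x k < d.
Proof. by move=> d0; rewrite /cell; case: eqP => // h; exact: ltn_ord. Qed.

Lemma cell_out d n (x : {ffun 'I_n -> 'I_d}) k : n <= k -> cell x k = 0.
Proof. by rewrite /cell; case: eqP => // h; rewrite leqNgt h. Qed.

Theorem theorem1 (d : nat) (c : 'I_8 -> 'I_d) :
  1 < d ->
  ((forall n : nat, 0 < n -> @fdca_reversible d n c) <->
   [/\ coprime (c (inord 5)) d,
       [/\ rad d %| c (inord 0), rad d %| c (inord 1),
           rad d %| c (inord 2) & rad d %| c (inord 3)]
     & rad d %| c (inord 4) * c (inord 6)]).
Proof.
move=> d1; have d0 : 0 < d by exact: ltnW.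
split.
  move=> Hrev.
  have facts p : prime p -> p %| d ->
     ~~ (p %| c (inord 5)) /\ p %| c (inord 0) /\ p %| c (inord 1) /\
         p %| c (inord 2) /\ p %| c (inord 3) /\ p %| c (inord 4) * c (inord 6).
    move=> pp pd.
    have I n : 0 < n -> injn (aF p c) n by move=> n0; exact: transfer (Hrev n n0).
    have h5 := a5nz (I 1 erefl).
    have h3 := a3z (I 2 erefl).
    have h1 := a1z (I 2 erefl) h3 h5.
    have h0 := a0z (I 3 erefl) h1 h3 h5.
    have h2 := a2z (I 6 erefl) h0 h1 h3.
    have h46 := a46 I h0 h1 h2 h3 h5.
    have chp := pchar_Fp pp.
    rewrite !(dvdn_pcharf chp) natrM.
    by rewrite -!/(aF p c _) h0 h1 h2 h3 h46 (negbTE h5) !eqxx.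
  split.
  - by apply: cop_of => // p pp pd; case: (facts p pp pd).
  - by split; apply: rad_dvd => // p pp pd; have [? [? [? [? [? ?]]]]] := facts p pp pd.
  - by apply: rad_dvd => // p pp pd; have [? [? [? [? [? ?]]]]] := facts p pp pd.
move=> [hc5 [h0 h1 h2 h3] h46] n n0.
apply: injF_bij => x y E.
pose C j := Posz (nat_of_ord (c (inord j))).
pose X k := Posz (cell x k); pose Y k := Posz (cell y k).
have hcore p : prime p -> p %| d -> forall j,
    ((Posz p ^+ logn p d)%R %| (X j - Y j)%R)%Z.
  move=> pp pd; apply: (core (d := d) (n := n) (C := C)) => //.
  - move=> j; rewrite dvdzE /=.
    by case: j => [|[|[|[|j]]]] // _; apply: dvdn_trans (dvd_rad pp pd d0) _.
  - by rewrite dvdzE /=; apply: dvdn_trans (dvd_rad pp pd d0) _.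
  - rewrite dvdzE /=; apply/negP => h5.
    move: hc5; rewrite /coprime => /eqP g1.
    have : p %| 1 by rewrite -g1 dvdn_gcd h5 pd.
    by rewrite dvdn1 => /eqP p1; rewrite p1 in pp.
  - by move=> j hj; rewrite /X /Y !cell_out //; split.
  - move=> i hi.
    have := congr1 (fun f : {ffun 'I_n -> 'I_d} => nat_of_ord (f (Ordinal hi))) E.
    rewrite /= !gvalE //= /fdca_rule => e.
    rewrite -eqz_mod_dvd.
    have PE (z : {ffun 'I_n -> 'I_d}) : PZ C (lft (fun k => Posz (cell z k)) i)
      (Posz (cell z i)) (Posz (cell z i.+1)) =
      Posz (c (inord 0) * (if i == 0 then 0 else cell z i.-1) * cell z i * cell z i.+1 +
      c (inord 1) * (if i == 0 then 0 else cell z i.-1) * cell z i +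
      c (inord 2) * (if i == 0 then 0 else cell z i.-1) * cell z i.+1 +
      c (inord 3) * cell z i * cell z i.+1 +
      c (inord 4) * (if i == 0 then 0 else cell z i.-1) + c (inord 5) * cell z i +
      c (inord 6) * cell z i.+1 + c (inord 7)).
      by rewrite !PoszD !PoszM /PZ /lft; case: (i == 0).
    by rewrite /X /Y !PE; apply/eqP; rewrite !modz_nat e.
have dd j : d %| `|(X j - Y j)%R|.
  apply/dvdn_partP => // p; rewrite mem_primes => /and3P[pp _ pd].
  by rewrite p_part; move: (hcore p pp pd j); rewrite dvdzE abszX.
apply/ffunP => i; apply: val_inj; change (nat_of_ord (x i) = nat_of_ord (y i)); rewrite -!cellO.
have := dd i; have := cell_lt x i d0; have := cell_lt y i d0.
rewrite /X /Y; move: (cell x i) (cell y i) => u v hu hv.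
move=> h.
have [le|le] := leqP v u.
  move: h; rewrite distnEl // => h.
  have [h0'|hp] := posnP (u - v); first by apply/eqP; rewrite eqn_leq le -subn_eq0 h0'.
  by have := dvdn_leq hp h; rewrite leqNgt (leq_ltn_trans (leq_subr _ _) hv).
move: h; rewrite distnEr; last exact: ltnW.
move=> h.
have hp : 0 < v - u by rewrite subn_gt0.
by have := dvdn_leq hp h; rewrite leqNgt (leq_ltn_trans (leq_subr _ _) hu).
Qed.
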